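(* Let $\ell\in\mathbb{Z}^2$ and define the event $\Sigma=\{\mathrm{An}(\ell)\cap\mathrm{An}(0)\neq\emptyset\}\cup\{\mathrm{De}(\ell)\cap\mathrm{De}(0)\neq\emptyset\}$. Then for every $0\le p\le 1$, $$P_p\big(\mathrm{An}(\ell)\cap\mathrm{An}(0)\neq\emptyset\big)\ \ge\ 1-\big(1-P_p(\Sigma)\big)^{1/2}.$$
   Context: Oriented square lattice: node set $\mathbb{Z}^2$, with a directed edge $u\to v$ if and only if $v-u\in\{(1,0),(0,1)\}$; $E(\mathbb{Z}^2)$ denotes this edge set. Bernoulli bond percolation with parameter $p\in[0,1]$: each edge of $E(\mathbb{Z}^2)$ is independently declared open with probability $p$ and closed otherwise; $P_p$ is the resulting product measure on $\Omega=\{0,1\}^{E(\mathbb{Z}^2)}$. In a configuration, $\mathrm{An}(u)$ is the set consisting of $u$ and all nodes $v$ from which there is a directed path $v\to\cdots\to u$ consisting of open edges traversed in their orientation; $\mathrm{De}(u)$ is the set consisting of $u$ and all nodes $v$ reachable from $u$ by such a directed open path. *)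

(* Defs.v *)
From Stdlib Require Import Reals ZArith List Classical ClassicalDescription.
Open Scope R_scope.

Definition node : Type := (Z * Z)%type.

(* An oriented edge is (u, b): if b = true it is u -> u + (1,0),
   if b = false it is u -> u + (0,1).  This enumerates E(Z^2) bijectively. *)
Definition edge : Type := (node * bool)%type.

Definition tail (e : edge) : node := fst e.
Definition head (e : edge) : node :=
  match e with
  | ((x, y), true) => ((x + 1)%Z, y)
  | ((x, y), false) => (x, (y + 1)%Z)
  end.

(* A configuration omega in Omega = {0,1}^{E(Z^2)}; true = open. *)
Definition config : Type := edge -> bool.

Inductive open_path (w : config) : node -> node -> Prop :=
| op_refl : forall u, open_path w u u
| op_step : forall (e : edge) v,
    w e = true -> open_path w (head e) v -> open_path w (tail e) v.

Definition An (w : config) (u v : node) : Prop := open_path w v u.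
Definition De (w : config) (u v : node) : Prop := open_path w u v.

Definition origin : node := (0%Z, 0%Z).

Definition EvAn (l : node) (w : config) : Prop :=
  exists v, An w l v /\ An w origin v.

Definition EvSigma (l : node) (w : config) : Prop :=
  EvAn l w \/ exists v, De w l v /\ De w origin v.

Definition edge_eq_dec : forall e1 e2 : edge, {e1 = e2} + {e1 <> e2}.
Proof. repeat decide equality; apply Z.eq_dec. Defined.

Definition upd (w : config) (e : edge) (b : bool) : config :=
  fun e' => if edge_eq_dec e' e then b else w e'.

(* Exact product-measure probability that E holds for the configuration
   obtained from w by resampling the (distinct) edges of L independently,
   each open with probability p. *)
Fixpoint probL (p : R) (L : list edge) (w : config) (E : config -> Prop) : R :=
  match L with
  | nil => if excluded_middle_informative (E w) then 1 else 0
  | e :: L' => p * probL p L' (upd w e true) E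
               + (1 - p) * probL p L' (upd w e false) E
  end.

Definition zrange (n : nat) : list Z :=
  map (fun i => (Z.of_nat i - Z.of_nat n)%Z) (seq 0 (2 * n + 1)).

Definition in_box (n : nat) (u : node) : bool :=
  (Z.leb (- Z.of_nat n) (fst u) && Z.leb (fst u) (Z.of_nat n) &&
   Z.leb (- Z.of_nat n) (snd u) && Z.leb (snd u) (Z.of_nat n))%bool.

Definition box_edges (n : nat) : list edge :=
  filter (fun e => in_box n (head e))
    (flat_map (fun x => flat_map (fun y => ((x, y), true) :: ((x, y), false) :: nil)
                         (zrange n)) (zrange n)).

(* P_p( E evaluated on the configuration where all edges outside the box
   [-n,n]^2 are closed ).  For increasing events determined by finite open
   paths (such as EvAn, EvSigma) this is nondecreasing in n and converges to
   P_p(E) by continuity of the product measure. *)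
Definition boxprob (p : R) (n : nat) (E : config -> Prop) : R :=
  probL p (box_edges n) (fun _ => false) E.

(* Main.v *)
Require Import Defs.
From Stdlib Require Import Reals ZArith.
From Stdlib Require Import List Lra Lia Permutation FunctionalExtensionality Classical ClassicalDescription.
Require Import Defs.
Open Scope R_scope.

Definition leC (w w' : config) : Prop := forall e, w e = true -> w' e = true.

Lemma upd_same w e b : upd w e b e = b.
Proof. unfold upd; destruct (edge_eq_dec e e); congruence. Qed.
Lemma upd_other w e b e' : e' <> e -> upd w e b e' = w e'.
Proof. unfold upd; destruct (edge_eq_dec e' e); congruence. Qed.
Lemma upd_idem w e b : w e = b -> upd w e b = w.
Proof. intros H; apply functional_extensionality; intro f; unfold upd;
  destruct (edge_eq_dec f e); subst; auto. Qed.
Lemma upd_upd_same w e b b' : upd (upd w e b) e b' = upd w e b'.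
Proof. apply functional_extensionality; intro f; unfold upd;
  destruct (edge_eq_dec f e); auto. Qed.
Lemma upd_comm w e1 e2 b1 b2 : e1 <> e2 ->
  upd (upd w e1 b1) e2 b2 = upd (upd w e2 b2) e1 b1.
Proof. intro H; apply functional_extensionality; intro f; unfold upd;
  destruct (edge_eq_dec f e2); destruct (edge_eq_dec f e1); subst; congruence. Qed.
Lemma upd_mono w w' e b : leC w w' -> leC (upd w e b) (upd w' e b).
Proof. intros H f; unfold upd; destruct (edge_eq_dec f e); auto. Qed.
Lemma leC_upd_ft w e : leC (upd w e false) (upd w e true).
Proof. intros f; unfold upd; destruct (edge_eq_dec f e); auto; discriminate. Qed.
Lemma leC_refl w : leC w w.
Proof. intros f; auto. Qed.

Section P.
Variable p : R.
Hypothesis Hp : 0 <= p <= 1.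

Lemma probL_range L : forall w E, 0 <= probL p L w E <= 1.
Proof.
  induction L as [|e L IH]; intros w E; simpl.
  - destruct (excluded_middle_informative (E w)); lra.
  - pose proof (IH (upd w e true) E); pose proof (IH (upd w e false) E); nra.
Qed.

Lemma probL_mono_E L : forall w (E E' : config -> Prop), (forall v, E v -> E' v) ->
  probL p L w E <= probL p L w E'.
Proof.
  induction L as [|e L IH]; intros w E E' H; simpl.
  - destruct (excluded_middle_informative (E w)); destruct (excluded_middle_informative (E' w)); try lra.
    exfalso; auto.
  - pose proof (IH (upd w e true) E E' H); pose proof (IH (upd w e false) E E' H); nra.
Qed.

Lemma probL_compl L : forall w E, probL p L w (fun v => ~ E v) = 1 - probL p L w E.
Proof.
  induction L as [|e L IH]; intros w E; simpl.
  - destruct (excluded_middle_informative (E w)); destruct (excluded_middle_informative (~ E w)); try lra; tauto.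
  - rewrite !IH; ring.
Qed.

Lemma probL_mono_inc L : forall w w' (E : config -> Prop),
  (forall v v', leC v v' -> E v -> E v') -> leC w w' ->
  probL p L w E <= probL p L w' E.
Proof.
  induction L as [|e L IH]; intros w w' E HE Hw; simpl.
  - destruct (excluded_middle_informative (E w)); destruct (excluded_middle_informative (E w')); try lra.
    exfalso; eauto.
  - pose proof (IH (upd w e true) (upd w' e true) E HE (upd_mono _ _ _ _ Hw)).
    pose proof (IH (upd w e false) (upd w' e false) E HE (upd_mono _ _ _ _ Hw)). nra.
Qed.

Lemma probL_mono_dec L : forall w w' (E : config -> Prop),
  (forall v v', leC v v' -> E v' -> E v) -> leC w w' ->
  probL p L w' E <= probL p L w E.
Proof.
  induction L as [|e L IH]; intros w w' E HE Hw; simpl.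
  - destruct (excluded_middle_informative (E w)); destruct (excluded_middle_informative (E w')); try lra.
    exfalso; eauto.
  - pose proof (IH (upd w e true) (upd w' e true) E HE (upd_mono _ _ _ _ Hw)).
    pose proof (IH (upd w e false) (upd w' e false) E HE (upd_mono _ _ _ _ Hw)). nra.
Qed.

Lemma probL_in_upd L : forall w e b E, In e L -> probL p L (upd w e b) E = probL p L w E.
Proof.
  induction L as [|e' L IH]; intros w e b E Hin; simpl in *.
  - tauto.
  - destruct (edge_eq_dec e' e) as [->|Hne].
    + rewrite !upd_upd_same; auto.
    + destruct Hin as [->|Hin]; [congruence|].
      rewrite (upd_comm w e e' b true) by congruence.
      rewrite (upd_comm w e e' b false) by congruence.
      rewrite (IH (upd w e' true)), (IH (upd w e' false)); auto.
Qed.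

Lemma probL_dup L w e E : In e L -> probL p (e :: L) w E = probL p L w E.
Proof. intro H; simpl; rewrite !probL_in_upd; auto; ring. Qed.

Lemma probL_nodup L : forall w E, probL p (nodup edge_eq_dec L) w E = probL p L w E.
Proof.
  induction L as [|e L IH]; intros w E; simpl; auto.
  destruct (in_dec edge_eq_dec e L).
  - rewrite IH, !probL_in_upd; auto; ring.
  - simpl; rewrite !IH; auto.
Qed.

Lemma probL_perm L L' : Permutation L L' -> forall w E, probL p L w E = probL p L' w E.
Proof.
  induction 1; intros w E; simpl; auto.
  - rewrite !IHPermutation; auto.
  - destruct (edge_eq_dec x y) as [->|Hne]; [ring|].
    rewrite !(upd_comm _ x y) by congruence. ring.
  - rewrite IHPermutation1; auto.
Qed.

Lemma probL_base L : forall w (E : config -> Prop),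
  (forall v v', leC v v' -> E v -> E v') -> (forall f, In f L -> w f = false) ->
  (if excluded_middle_informative (E w) then 1 else 0) <= probL p L w E.
Proof.
  induction L as [|e L IH]; intros w E HE Hw; simpl.
  - lra.
  - assert (H0 : upd w e false = w) by (apply upd_idem; apply Hw; simpl; auto).
    rewrite H0.
    assert (H1 := IH w E HE (fun f Hf => Hw f (or_intror Hf))).
    assert (H2 := probL_mono_inc L w (upd w e true) E HE).
    assert (leC w (upd w e true)) by (rewrite <- H0 at 1; apply leC_upd_ft).
    specialize (H2 H). nra.
Qed.

Lemma probL_incl_nd L1 : forall L2 w (E : config -> Prop),
  NoDup L1 -> NoDup L2 -> incl L1 L2 ->
  (forall v v', leC v v' -> E v -> E v') ->
  (forall f, In f L2 -> ~ In f L1 -> w f = false) ->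
  probL p L1 w E <= probL p L2 w E.
Proof.
  induction L1 as [|e L1 IH]; intros L2 w E N1 N2 Hi HE Hw.
  - apply probL_base; auto.
  - inversion N1 as [|? ? Hn1 N1']; subst.
    assert (Hin : In e L2) by (apply Hi; simpl; auto).
    destruct (in_split _ _ Hin) as [A [B ->]].
    rewrite (probL_perm (A ++ e :: B) (e :: A ++ B)) by (symmetry; apply Permutation_middle).
    assert (NAB : NoDup (A ++ B)) by (eapply NoDup_remove_1; eauto).
    assert (nAB : ~ In e (A ++ B)) by (eapply NoDup_remove_2; eauto).
    assert (Hi' : incl L1 (A ++ B)).
    { intros f Hf. assert (In f (A ++ e :: B)) by (apply Hi; simpl; auto).
      rewrite in_app_iff in *; simpl in *. destruct H as [?|[?|?]]; auto. subst; tauto. }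
    assert (Hw' : forall b f, In f (A ++ B) -> ~ In f L1 -> upd w e b f = false).
    { intros b f Hf Hf'. rewrite upd_other by (intro; subst; tauto).
      apply Hw. rewrite in_app_iff in *; simpl; tauto. simpl; intros [?|?]; subst; tauto. }
    simpl.
    pose proof (IH (A ++ B) (upd w e true) E N1' NAB Hi' HE (Hw' true)).
    pose proof (IH (A ++ B) (upd w e false) E N1' NAB Hi' HE (Hw' false)).
    nra.
Qed.

Lemma probL_incl L1 L2 w (E : config -> Prop) :
  incl L1 L2 ->
  (forall v v', leC v v' -> E v -> E v') ->
  (forall f, In f L2 -> ~ In f L1 -> w f = false) ->
  probL p L1 w E <= probL p L2 w E.
Proof.
  intros Hi HE Hw. rewrite <- (probL_nodup L1), <- (probL_nodup L2).
  apply probL_incl_nd; auto using NoDup_nodup.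
  - intros f Hf. rewrite nodup_In in *; auto.
  - intros f Hf Hf'. rewrite nodup_In in *; auto.
Qed.

Lemma probL_map (s : edge -> edge) (Hs : forall e, s (s e) = e) L :
  forall w E, probL p (map s L) w (fun v => E (fun e => v (s e))) = probL p L (fun e => w (s e)) E.
Proof.
  induction L as [|e L IH]; intros w E; simpl; auto.
  rewrite !IH.
  assert (K : forall b, (fun f => upd w (s e) b (s f)) = upd (fun f => w (s f)) e b).
  { intro b; apply functional_extensionality; intro f; unfold upd.
    destruct (edge_eq_dec (s f) (s e)) as [E1|E1]; destruct (edge_eq_dec f e) as [E2|E2]; subst; try congruence.
    all: exfalso; apply E2; rewrite <- (Hs f), E1, Hs; auto. }
  rewrite !K; auto.
Qed.

Lemma harris L : forall w (F G : config -> Prop),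
  (forall v v', leC v v' -> F v' -> F v) ->
  (forall v v', leC v v' -> G v' -> G v) ->
  probL p L w F * probL p L w G <= probL p L w (fun v => F v /\ G v).
Proof.
  induction L as [|e L IH]; intros w F G HF HG; simpl.
  - destruct (excluded_middle_informative (F w)); destruct (excluded_middle_informative (G w));
    destruct (excluded_middle_informative (F w /\ G w)); try lra; tauto.
  - pose proof (IH (upd w e true) F G HF HG).
    pose proof (IH (upd w e false) F G HF HG).
    pose proof (probL_mono_dec L _ _ F HF (leC_upd_ft w e)).
    pose proof (probL_mono_dec L _ _ G HG (leC_upd_ft w e)).
    set (f1 := probL p L (upd w e true) F) in *.
    set (f0 := probL p L (upd w e false) F) in *.
    set (g1 := probL p L (upd w e true) G) in *.
    set (g0 := probL p L (upd w e false) G) in *.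
    assert (0 <= (f0 - f1) * (g0 - g1)) by (apply Rmult_le_pos; lra).
    assert (0 <= p * (1 - p)) by (apply Rmult_le_pos; lra).
    assert (0 <= p * (1 - p) * ((f0 - f1) * (g0 - g1))) by (apply Rmult_le_pos; lra).
    nra.
Qed.
End P.

Definition inb (n : nat) (u : node) : Prop :=
  (- Z.of_nat n <= fst u <= Z.of_nat n)%Z /\ (- Z.of_nat n <= snd u <= Z.of_nat n)%Z.

Lemma In_zrange n z : In z (zrange n) <-> (- Z.of_nat n <= z <= Z.of_nat n)%Z.
Proof.
  unfold zrange; rewrite in_map_iff; split.
  - intros [i [<- Hi]]; apply in_seq in Hi; lia.
  - intros H; exists (Z.to_nat (z + Z.of_nat n)); split; [lia|]. apply in_seq; lia.
Qed.

Lemma in_box_iff n u : in_box n u = true <-> inb n u.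
Proof.
  unfold in_box, inb; rewrite !Bool.andb_true_iff, !Z.leb_le; tauto.
Qed.

Lemma In_box_edges n e : In e (box_edges n) <-> inb n (tail e) /\ inb n (head e).
Proof.
  unfold box_edges; rewrite filter_In, in_box_iff, in_flat_map.
  destruct e as [[x y] b]; unfold tail; simpl fst.
  split.
  - intros [[x' [Hx Hy]] Hh]; split; auto.
    rewrite in_flat_map in Hy; destruct Hy as [y' [Hy Hin]].
    simpl in Hin. apply In_zrange in Hx; apply In_zrange in Hy.
    destruct Hin as [E|[E|[]]]; inversion E; subst; unfold inb; simpl; lia.
  - intros [Ht Hh]; split; auto. exists x; split.
    + apply In_zrange; unfold inb in Ht; simpl in Ht; lia.
    + rewrite in_flat_map; exists y; split.
      * apply In_zrange; unfold inb in Ht; simpl in Ht; lia.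
      * destruct b; simpl; auto.
Qed.

Definition refl (l u : node) : node := ((fst l - fst u)%Z, (snd l - snd u)%Z).

Definition sig (l : node) (e : edge) : edge :=
  match e with
  | ((x, y), true) => ((fst l - x - 1)%Z, (snd l - y)%Z, true)
  | ((x, y), false) => ((fst l - x)%Z, (snd l - y - 1)%Z, false)
  end.

Lemma sig_inv l e : sig l (sig l e) = e.
Proof.
destruct l as [a c]; destruct e as [[x y] []]; simpl.
- replace (a - (a - x - 1) - 1)%Z with x by lia. replace (c - (c - y))%Z with y by lia. reflexivity.
- replace (a - (a - x))%Z with x by lia. replace (c - (c - y - 1) - 1)%Z with y by lia. reflexivity.
Qed.

Lemma tail_sig l e : tail (sig l e) = refl l (head e).
Proof. destruct l as [a c]; destruct e as [[x y] []]; unfold refl; simpl; f_equal; lia. Qed.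
Lemma head_sig l e : head (sig l e) = refl l (tail e).
Proof. destruct l as [a c]; destruct e as [[x y] []]; unfold refl; simpl; f_equal; lia. Qed.

Lemma path_snoc w u v f : open_path w u v -> w f = true -> tail f = v -> open_path w u (head f).
Proof.
  induction 1; intros Hf Ht.
  - subst. apply op_step; auto. apply op_refl.
  - apply op_step; auto.
Qed.

Lemma path_refl l w u v : open_path w u v ->
  open_path (fun e => w (sig l e)) (refl l v) (refl l u).
Proof.
  induction 1.
  - apply op_refl.
  - rewrite <- head_sig. apply path_snoc with (refl l (head e)); auto.
    + rewrite sig_inv; auto.
    + apply tail_sig.
Qed.

Lemma refl_refl l u : refl l (refl l u) = u.
Proof. destruct l, u; unfold refl; simpl; f_equal; lia. Qed.
Lemma refl_self l : refl l l = origin.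
Proof. destruct l; unfold refl, origin; simpl; f_equal; lia. Qed.
Lemma refl_origin l : refl l origin = l.
Proof. destruct l; unfold refl, origin; simpl; f_equal; lia. Qed.

Definition EvDe (l : node) (w : config) : Prop := exists v, De w l v /\ De w origin v.

Lemma EvDe_sig l v : EvDe l (fun e => v (sig l e)) -> EvAn l v.
Proof.
  intros [y [H1 H2]]. unfold De in *.
  apply (path_refl l) in H1; apply (path_refl l) in H2.
  assert (K : (fun e => v (sig l (sig l e))) = v) by (apply functional_extensionality; intro; rewrite sig_inv; auto).
  rewrite K in H1, H2. rewrite refl_self in H1. rewrite refl_origin in H2.
  exists (refl l y); split; auto.
Qed.

Lemma path_mono w w' u v : leC w w' -> open_path w u v -> open_path w' u v.
Proof. intros H; induction 1; [apply op_refl|apply op_step; auto]. Qed.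

Lemma EvAn_inc l : forall v v', leC v v' -> EvAn l v -> EvAn l v'.
Proof. intros v v' H [x [H1 H2]]; exists x; split; eapply path_mono; eauto. Qed.
Lemma EvDe_inc l : forall v v', leC v v' -> EvDe l v -> EvDe l v'.
Proof. intros v v' H [x [H1 H2]]; exists x; split; eapply path_mono; eauto. Qed.

Lemma inb_mono n m u : (n <= m)%nat -> inb n u -> inb m u.
Proof. unfold inb; lia. Qed.

Lemma inb_refl n l u : inb n u ->
  inb (n + Z.to_nat (Z.abs (fst l) + Z.abs (snd l))) (refl l u).
Proof. destruct l as [a c]; destruct u as [x y]; unfold inb, refl; simpl; lia. Qed.

Section Q.
Variable p : R.
Hypothesis Hp : 0 <= p <= 1.

Lemma boxprob_mono n m E : (n <= m)%nat -> (forall v v', leC v v' -> E v -> E v') ->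
  boxprob p n E <= boxprob p m E.
Proof.
  intros Hnm HE; unfold boxprob; apply probL_incl; auto.
  intros e He; rewrite In_box_edges in *; destruct He; split; eapply inb_mono; eauto.
Qed.

Lemma De_le_An l n :
  boxprob p n (EvDe l) <= boxprob p (n + Z.to_nat (Z.abs (fst l) + Z.abs (snd l))) (EvAn l).
Proof.
  unfold boxprob.
  rewrite <- (probL_map p (sig l) (sig_inv l) (box_edges n) (fun _ => false) (EvDe l)).
  eapply Rle_trans.
  - apply probL_mono_E; auto. apply EvDe_sig.
  - apply probL_incl; auto. 2: apply EvAn_inc.
    intros e He. apply in_map_iff in He; destruct He as [f [<- Hf]].
    rewrite In_box_edges in *; destruct Hf as [H1 H2].
    rewrite tail_sig, head_sig; split; apply inb_refl; auto.
Qed.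
End Q.

Theorem mainTheorem4 (l : node) (p PA PSigma : R) :
  0 <= p <= 1 ->
  Un_cv (fun n => boxprob p n (EvAn l)) PA ->
  Un_cv (fun n => boxprob p n (EvSigma l)) PSigma ->
  PA >= 1 - sqrt (1 - PSigma).
Proof.
  intros Hp HA HS.
  set (a := fun n => boxprob p n (EvAn l)) in *.
  set (K := Z.to_nat (Z.abs (fst l) + Z.abs (snd l))).
  assert (Hg : Un_growing a).
  { intro n; unfold a; apply boxprob_mono; auto. apply EvAn_inc. }
  assert (HaPA : forall n, a n <= PA) by (intro; apply growing_ineq; auto).
  assert (Ha1 : forall n, a n <= 1) by (intro; unfold a, boxprob; apply probL_range; auto).
  assert (Ha0 : forall n, 0 <= a n) by (intro; unfold a, boxprob; apply probL_range; auto).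
  assert (Hd : forall n, boxprob p n (EvDe l) <= PA).
  { intro n; eapply Rle_trans; [apply De_le_An; auto|]. apply (HaPA (n + K)%nat). }
  assert (Hkey : forall n, (1 - a n) * (1 - PA) <= 1 - boxprob p n (EvSigma l)).
  { intro n. unfold boxprob. rewrite <- probL_compl by auto.
    eapply Rle_trans. 2: apply probL_mono_E with (E := fun v => ~ EvAn l v /\ ~ EvDe l v); auto.
    2: { intros v [H1 H2] [H|H]; auto. }
    eapply Rle_trans. 2: apply harris; auto.
    2,3: intros v v' Hv H1 H2; apply H1; eauto using EvAn_inc, EvDe_inc.
    rewrite !probL_compl by auto. fold (boxprob p n (EvAn l)) (boxprob p n (EvDe l)).
    fold (a n). apply Rmult_le_compat_l; [specialize (Ha1 n); lra|]. specialize (Hd n); lra. }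
  assert (HPA1 : PA <= 1).
  { apply (Rle_cv_lim (Un:=a) (Vn:=fun _ => 1)); auto.
    intros eps He; exists 0%nat; intros; unfold R_dist; rewrite Rminus_diag, Rabs_R0; auto. }
  assert (Hc : forall c : R, Un_cv (fun _ => c) c).
  { intros c eps He; exists 0%nat; intros; unfold R_dist; rewrite Rminus_diag, Rabs_R0; auto. }
  assert (Hlim : (1 - PA) * (1 - PA) <= 1 - PSigma).
  { apply (Rle_cv_lim Hkey).
    - apply CV_mult; [apply CV_minus; auto|apply Hc].
    - apply CV_minus; auto. }
  assert (1 - PA <= sqrt (1 - PSigma)).
  { rewrite <- (sqrt_square (1 - PA)) by lra. apply sqrt_le_1_alt; auto. }
  lra.
Qed.
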